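(* Let $q$ be a prime power and $b,k,r$ positive integers. Let $\boldsymbol{x}=(x^{(1)},x^{(2)})\in\mathbb{F}_q^{k+r}$ and $\boldsymbol{y}=(y^{(1)},y^{(2)})\in\mathbb{F}_q^{k+r}$ with $x^{(1)},y^{(1)}\in\mathbb{F}_q^k$ and $x^{(2)},y^{(2)}\in\mathbb{F}_q^r$. Then \[ d_b(x^{(1)},y^{(1)})+d_b(x^{(2)},y^{(2)})-(b-1)\le d_b(\boldsymbol{x},\boldsymbol{y})\le d_b(x^{(1)},y^{(1)})+d_b(x^{(2)},y^{(2)})+(b-1). \]
   Context: For $\boldsymbol{z}=(z_0,\ldots,z_{n-1})\in\mathbb{F}_q^n$, the $b$-symbol read vector is $\pi_b(\boldsymbol{z})=[(z_0,\ldots,z_{b-1}),(z_1,\ldots,z_b),\ldots,(z_{n-1},z_0,\ldots,z_{b-2})]$ with indices taken modulo $n$, and the $b$-symbol distance is $d_b(\boldsymbol{z},\boldsymbol{w})=d_H(\pi_b(\boldsymbol{z}),\pi_b(\boldsymbol{w}))$, the Hamming distance between the read vectors viewed as words over $\mathbb{F}_q^b$. The paper's standing assumption is $2<b<k$. *)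

(* Defs.v *)
From mathcomp Require Import all_boot all_order all_algebra all_field.
Set Implicit Arguments. Unset Strict Implicit. Unset Printing Implicit Defensive.

Definition cyc_idx (n : nat) (i : 'I_n) (j : nat) : 'I_n :=
  Ordinal (ltn_pmod (i + j) (leq_ltn_trans (leq0n i) (ltn_ord i))).

Definition bread (F : Type) (b n : nat) (z : 'rV[F]_n) (i : 'I_n) : {ffun 'I_b -> F} :=
  [ffun j : 'I_b => z ord0 (cyc_idx i j)].

(* b-symbol distance: Hamming distance between the read vectors,
   viewed as words over F^b. *)
Definition bdist (F : finFieldType) (b n : nat) (x y : 'rV[F]_n) : nat :=
  #|[set i : 'I_n | bread b x i != bread b y i]|.

(* Main.v *)
Require Import Defs.
From mathcomp Require Import all_boot all_order all_algebra all_field.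
From mathcomp Require Import zify.
Set Implicit Arguments. Unset Strict Implicit. Unset Printing Implicit Defensive.

Definition win (n b : nat) (f : nat -> bool) (i : nat) : bool :=
  has (fun j => f ((i + j) %% n)) (iota 0 b).
Definition Wn n b f := \sum_(0 <= i < n) (win n b f i : nat).
Definition tt n b (f : nat -> bool) i : bool :=
  ~~ has (fun j => f ((i + j) %% n)) (iota 0 b) && f ((i + b) %% n).
Definition Dn n b f := \sum_(0 <= i < n) (tt n b f i : nat).

Lemma W0 n f : Wn n 0 f = 0.
Proof. by rewrite /Wn big1. Qed.

Lemma WS n b f : Wn n b.+1 f = Wn n b f + Dn n b f.
Proof.
rewrite /Wn /Dn -big_split /=; apply: eq_bigr => i _.
rewrite /win /tt -addn1 iotaD has_cat /= add0n.
by case: (has _ _); case: (f _).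
Qed.

Lemma sum_split_nat k r (F : nat -> nat) :
  \sum_(0 <= i < k + r) F i = \sum_(0 <= i < k) F i + \sum_(0 <= i < r) F (k + i).
Proof.
elim: r => [|r IH]; first by rewrite addn0 [X in _ + X]big_geq // addn0.
by rewrite addnS !big_nat_recr //= IH addnA.
Qed.

Lemma sum_le1 m (P : nat -> bool) :
  (forall i j, i < j -> j < m -> P i -> P j -> False) ->
  \sum_(0 <= i < m) (P i : nat) <= 1.
Proof.
elim: m => [|m IH] H; first by rewrite big_geq.
rewrite big_nat_recr //=.
case Pm: (P m).
- rewrite big1_seq ?add0n // => i /andP[_]; rewrite mem_index_iota => /andP[_ Hi].
  case Pi: (P i) => //. exfalso; exact: (H i m).
- rewrite addn0; apply: IH => i j Hij Hj; apply: H => //; lia.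
Qed.

Lemma sum_pos_ex m (P : nat -> bool) :
  0 < \sum_(0 <= i < m) (P i : nat) -> exists2 i, i < m & P i.
Proof.
elim: m => [|m IH]; first by rewrite big_geq.
rewrite big_nat_recr //=. case Pm: (P m); first by exists m.
rewrite addn0 => /IH [i Hi Pi]; exists i => //; lia.
Qed.

Lemma ex_sum_pos m (P : nat -> bool) i :
  i < m -> P i -> 0 < \sum_(0 <= i < m) (P i : nat).
Proof.
elim: m => [//|m IH] Hi Pi; rewrite big_nat_recr //=.
rewrite ltnS leq_eqVlt in Hi; case/orP: Hi => [/eqP Ei|Hi].
- by rewrite -Ei Pi addn1.
- have := IH Hi Pi; lia.
Qed.

Lemma E_zero m (P : nat -> bool) : \sum_(0 <= i < m) ((m <= i + 0) && P i : nat) = 0.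
Proof.
rewrite big1_seq // => i /andP[_]; rewrite mem_index_iota => /andP[_ Hi].
by rewrite addn0 leqNgt Hi.
Qed.

Lemma tt_good m b f i p : tt m b f i -> i <= p -> p < i + b -> f (p %% m) = false.
Proof.
case/andP => /hasPn H _ Hip Hpb.
have Hx : p - i \in iota 0 b by rewrite mem_iota; lia.
have := H _ Hx; rewrite subnKC //; apply: negbTE.
Qed.

Lemma tt_bad m b f i : tt m b f i -> f ((i + b) %% m).
Proof. by case/andP. Qed.

Lemma tt_build m b f i :
  (forall p, i <= p -> p < i + b -> f (p %% m) = false) -> f ((i + b) %% m) -> tt m b f i.
Proof.
move=> H Hb; rewrite /tt Hb andbT; apply/hasPn => j; rewrite mem_iota => Hj.
by rewrite H //; lia.
Qed.

Lemma tt_per m b f i : tt m b f i -> tt m b f (i + m).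
Proof.
move=> T; apply: tt_build.
- move=> p h1 h2; have -> : p = (p - m) + m by lia.
  rewrite modnDr; apply: (tt_good T); lia.
- by rewrite addnAC modnDr (tt_bad T).
Qed.

Lemma tt_uniq m b f i i' : tt m b f i -> tt m b f i' -> i < i' -> i' <= i + b -> False.
Proof.
move=> Hi Hi' H1 H2.
have H3 : i + b < i' + b by lia.
have := tt_good Hi' H2 H3; by rewrite (tt_bad Hi).
Qed.

Lemma modM m p : m <= p -> p < m + m -> p %% m = p - m.
Proof.
move=> h1 h2; rewrite -{1}(subnK h1) modnDr modn_small //; lia.
Qed.

Lemma tt_g1 k r b f1 g i : (forall p, p < k -> g p = f1 p) -> i + b < k ->
  tt (k + r) b g i = tt k b f1 i.
Proof.
move=> hg H; rewrite /tt !modn_small; try lia.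
rewrite hg; last lia.
congr (~~ _ && _); apply: eq_in_has => j; rewrite mem_iota => Hj /=.
rewrite !modn_small; try lia. by rewrite hg //; lia.
Qed.

Lemma tt_g2 k r b f2 g i : (forall p, p < r -> g (k + p) = f2 p) -> i + b < r ->
  tt (k + r) b g (k + i) = tt r b f2 i.
Proof.
move=> hg H; rewrite /tt !modn_small; try lia.
rewrite -addnA hg; last lia.
congr (~~ _ && _); apply: eq_in_has => j; rewrite mem_iota => Hj /=.
rewrite !modn_small; try lia. by rewrite -addnA hg //; lia.
Qed.

Lemma Dsplit_g k r b f1 f2 g :
  (forall p, p < k -> g p = f1 p) -> (forall p, p < r -> g (k + p) = f2 p) ->
  Dn (k + r) b g =
    (\sum_(0 <= i < k) ((i + b < k) && tt k b f1 i : nat) +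
     \sum_(0 <= i < r) ((i + b < r) && tt r b f2 i : nat)) +
    (\sum_(0 <= i < k) ((k <= i + b) && tt (k + r) b g i : nat) +
     \sum_(0 <= i < r) ((r <= i + b) && tt (k + r) b g (k + i) : nat)).
Proof.
move=> hg1 hg2; rewrite /Dn sum_split_nat.
have -> : \sum_(0 <= i < k) (tt (k + r) b g i : nat) =
  \sum_(0 <= i < k) ((i + b < k) && tt k b f1 i : nat) +
  \sum_(0 <= i < k) ((k <= i + b) && tt (k + r) b g i : nat).
  rewrite -big_split; apply: eq_big_nat => i /andP[_ Hi] /=.
  case: (ltnP (i + b) k) => H /=; first by rewrite addn0 (tt_g1 r hg1 H).
  by rewrite add0n.
have -> : \sum_(0 <= i < r) (tt (k + r) b g (k + i) : nat) =
  \sum_(0 <= i < r) ((i + b < r) && tt r b f2 i : nat) +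
  \sum_(0 <= i < r) ((r <= i + b) && tt (k + r) b g (k + i) : nat).
  rewrite -big_split; apply: eq_big_nat => i /andP[_ Hi] /=.
  case: (ltnP (i + b) r) => H /=; first by rewrite addn0 (tt_g2 hg2 H).
  by rewrite add0n.
lia.
Qed.

Lemma Dsplit_f m b f :
  Dn m b f = \sum_(0 <= i < m) ((i + b < m) && tt m b f i : nat) +
             \sum_(0 <= i < m) ((m <= i + b) && tt m b f i : nat).
Proof.
rewrite /Dn -big_split; apply: eq_big_nat => i _ /=.
by case: (ltnP (i + b) m) => H /=; rewrite ?addn0 ?add0n.
Qed.

Lemma E_le1 m n b f c :
  \sum_(0 <= i < m) ((m <= i + b) && tt n b f (c + i) : nat) <= 1.
Proof.
apply: sum_le1 => i j Hij Hj /andP[H1 T1] /andP[H2 T2].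
apply: (tt_uniq T1 T2); lia.
Qed.

Lemma cross1 k r b f1 f2 g i1 i2 :
  (forall p, p < k -> g p = f1 p) -> (forall p, p < r -> g (k + p) = f2 p) ->
  i1 < k -> k <= i1 + b -> tt (k + r) b g i1 ->
  i2 < r -> r <= i2 + b -> tt (k + r) b g (k + i2) ->
  (exists2 i, i < k & (k <= i + b) && tt k b f1 i) \/
  (exists2 i, i < r & (r <= i + b) && tt r b f2 i).
Proof.
move=> hg1 hg2 h1 h1' T1 h2 h2' T2.
have U1 : i1 + b < k + i2.
  case: (ltnP (i1 + b) (k + i2)) => // H; exfalso; apply: (tt_uniq T1 T2); lia.
have U2 : i2 + b < r + i1.
  have T1' := tt_per T1.
  case: (ltnP (i2 + b) (r + i1)) => // H; exfalso; apply: (tt_uniq T2 T1'); lia.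
have good1 : forall p, i1 <= p -> p < i1 + b -> g p = false.
  move=> p p1 p2; have e : p %% (k + r) = p by apply: modn_small; lia.
  by rewrite -e; apply: (tt_good T1).
have bad1 : g (i1 + b).
  have e : (i1 + b) %% (k + r) = i1 + b by apply: modn_small; lia.
  by rewrite -e; apply: (tt_bad T1).
have good2a : forall p, k + i2 <= p -> p < k + r -> g p = false.
  move=> p p1 p2; have e : p %% (k + r) = p by apply: modn_small; lia.
  by rewrite -e; apply: (tt_good T2); lia.
have good2b : forall p, p < i2 + b - r -> g p = false.
  move=> p p1; have e : (p + (k + r)) %% (k + r) = p by rewrite modnDr modn_small; lia.
  by rewrite -e; apply: (tt_good T2); lia.
have bad2 : g (i2 + b - r).
  have e : (k + i2 + b) %% (k + r) = i2 + b - r by rewrite modM; lia.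
  by rewrite -e; apply: (tt_bad T2).
case: (leqP (i1 + r) (i2 + k)) => C.
- left; exists (i2 + k - r); first lia.
  apply/andP; split; first lia.
  apply: tt_build.
  + move=> p p1 p2; case: (ltnP p k) => pk.
    * rewrite modn_small // -hg1 //; apply: good1; lia.
    * have e : p %% k = p - k by rewrite modM; lia.
      rewrite e -hg1; last lia. apply: good2b; lia.
  + have e : (i2 + k - r + b) %% k = i2 + b - r by rewrite modM; lia.
    rewrite e -hg1 //; lia.
- right; exists (i1 + r - k); first lia.
  apply/andP; split; first lia.
  apply: tt_build.
  + move=> p p1 p2; case: (ltnP p r) => pr.
    * rewrite modn_small // -hg2 //; apply: good2a; lia.
    * have e : p %% r = p - r by rewrite modM; lia.
      rewrite e -hg2; last lia. apply: good1; lia.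
  + have e : (i1 + r - k + b) %% r = i1 + b - k by rewrite modM; lia.
    rewrite e -hg2; last lia.
    by have -> : k + (i1 + b - k) = i1 + b by lia.
Qed.

Lemma cross2 k r b f1 f2 g i1 i2 :
  (forall p, p < k -> g p = f1 p) -> (forall p, p < r -> g (k + p) = f2 p) ->
  i1 < k -> k <= i1 + b -> tt k b f1 i1 ->
  i2 < r -> r <= i2 + b -> tt r b f2 i2 ->
  (exists2 i, i < k & (k <= i + b) && tt (k + r) b g i) \/
  (exists2 i, i < r & (r <= i + b) && tt (k + r) b g (k + i)).
Proof.
move=> hg1 hg2 h1 h1' T1 h2 h2' T2.
have bk : b < k.
  case: (ltnP b k) => // H; exfalso; apply: (tt_uniq T1 (tt_per T1)); lia.
have br : b < r.
  case: (ltnP b r) => // H; exfalso; apply: (tt_uniq T2 (tt_per T2)); lia.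
have good1 : forall p, i1 <= p -> p < k -> f1 p = false.
  move=> p p1 p2; have e : p %% k = p by apply: modn_small; lia.
  by rewrite -e; apply: (tt_good T1); lia.
have good1b : forall p, p < i1 + b - k -> f1 p = false.
  move=> p p1; have e : (p + k) %% k = p by rewrite modnDr modn_small; lia.
  by rewrite -e; apply: (tt_good T1); lia.
have bad1 : f1 (i1 + b - k).
  have e : (i1 + b) %% k = i1 + b - k by rewrite modM; lia.
  by rewrite -e; apply: (tt_bad T1).
have good2 : forall p, i2 <= p -> p < r -> f2 p = false.
  move=> p p1 p2; have e : p %% r = p by apply: modn_small; lia.
  by rewrite -e; apply: (tt_good T2); lia.
have good2b : forall p, p < i2 + b - r -> f2 p = false.
  move=> p p1; have e : (p + r) %% r = p by rewrite modnDr modn_small; lia.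
  by rewrite -e; apply: (tt_good T2); lia.
have bad2 : f2 (i2 + b - r).
  have e : (i2 + b) %% r = i2 + b - r by rewrite modM; lia.
  by rewrite -e; apply: (tt_bad T2).
case: (leqP (i1 + r) (i2 + k)) => C.
- left; exists (i2 + k - r); first lia.
  apply/andP; split; first lia.
  apply: tt_build.
  + move=> p p1 p2; rewrite modn_small; last lia.
    case: (ltnP p k) => pk.
    * rewrite hg1 //; apply: good1; lia.
    * have -> : p = k + (p - k) by lia.
      rewrite hg2; last lia. apply: good2b; lia.
  + rewrite modn_small; last lia.
    have -> : i2 + k - r + b = k + (i2 + b - r) by lia.
    rewrite hg2 //; lia.
- right; exists (i1 + r - k); first lia.
  apply/andP; split; first lia.
  apply: tt_build.
  + move=> p p1 p2; case: (ltnP p (k + r)) => pn.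
    * rewrite modn_small //.
      have -> : p = k + (p - k) by lia.
      rewrite hg2; last lia. apply: good2; lia.
    * have e : p %% (k + r) = p - (k + r) by rewrite modM; lia.
      rewrite e hg1; last lia. apply: good1b; lia.
  + have e : (k + (i1 + r - k) + b) %% (k + r) = i1 + b - k by rewrite modM; lia.
    rewrite e hg1 //; lia.
Qed.

Lemma Dcons k r b f1 f2 g :
  (forall p, p < k -> g p = f1 p) -> (forall p, p < r -> g (k + p) = f2 p) ->
  [/\ Dn k b f1 + Dn r b f2 <= Dn (k + r) b g + 1,
      Dn (k + r) b g <= Dn k b f1 + Dn r b f2 + 1 &
      (b = 0 -> Dn (k + r) b g = Dn k b f1 + Dn r b f2)].
Proof.
move=> hg1 hg2.
rewrite (@Dsplit_g k r b f1 f2 g hg1 hg2) (Dsplit_f k) (Dsplit_f r).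
set S1 := \sum_(0 <= i < k) _.
set S2 := \sum_(0 <= i < r) _.
set E1f := \sum_(0 <= i < k) _.
set E2f := \sum_(0 <= i < r) _.
set E1g := \sum_(0 <= i < k) _.
set E2g := \sum_(0 <= i < r) _.
have l1 : E1g <= 1 by exact: (@E_le1 k (k + r) b g 0).
have l2 : E2g <= 1 by exact: (@E_le1 r (k + r) b g k).
have l3 : E1f <= 1 by exact: (@E_le1 k k b f1 0).
have l4 : E2f <= 1 by exact: (@E_le1 r r b f2 0).
have c1 : 0 < E1g -> 0 < E2g -> 0 < E1f \/ 0 < E2f.
  move=> /sum_pos_ex [i1 h1 /andP[h1' T1]] /sum_pos_ex [i2 h2 /andP[h2' T2]].
  case: (@cross1 k r b f1 f2 g i1 i2 hg1 hg2 h1 h1' T1 h2 h2' T2) => [[i hi Hi]|[i hi Hi]].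
  - by left; apply: (ex_sum_pos hi).
  - by right; apply: (ex_sum_pos hi).
have c2 : 0 < E1f -> 0 < E2f -> 0 < E1g \/ 0 < E2g.
  move=> /sum_pos_ex [i1 h1 /andP[h1' T1]] /sum_pos_ex [i2 h2 /andP[h2' T2]].
  case: (@cross2 k r b f1 f2 g i1 i2 hg1 hg2 h1 h1' T1 h2 h2' T2) => [[i hi Hi]|[i hi Hi]].
  - by left; apply: (ex_sum_pos hi).
  - by right; apply: (ex_sum_pos hi).
have z : b = 0 -> [/\ E1g = 0, E2g = 0, E1f = 0 & E2f = 0].
  by move=> b0; subst b; rewrite /E1g /E2g /E1f /E2f !E_zero.
split; try lia.
  move=> b0; have [-> -> -> ->] := z b0; lia.
Qed.

Lemma main_nat k r b f1 f2 g :
  (forall p, p < k -> g p = f1 p) -> (forall p, p < r -> g (k + p) = f2 p) ->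
  0 < b ->
  Wn k b f1 + Wn r b f2 <= Wn (k + r) b g + (b - 1) /\
  Wn (k + r) b g <= Wn k b f1 + Wn r b f2 + (b - 1).
Proof.
move=> hg1 hg2; elim: b => [//|b IH] _.
have [d1 d2 d3] := @Dcons k r b f1 f2 g hg1 hg2.
rewrite !WS.
case: b IH d1 d2 d3 => [|b] IH d1 d2 d3.
- rewrite !W0 d3 //; lia.
- have [i1 i2] := IH isT; lia.
Qed.

Definition fo (F : finFieldType) n (x y : 'rV[F]_n) (p : nat) : bool :=
  [exists i : 'I_n, (nat_of_ord i == p) && (x ord0 i != y ord0 i)].

Lemma fo_val (F : finFieldType) n (x y : 'rV[F]_n) (i : 'I_n) :
  fo x y i = (x ord0 i != y ord0 i).
Proof.
apply/existsP/idP => [[i' /andP[/eqP e h]]|h].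
- by have <- : i' = i by apply: val_inj.
- by exists i; rewrite eqxx.
Qed.

Lemma bdist_W (F : finFieldType) b n (x y : 'rV[F]_n) : bdist b x y = Wn n b (fo x y).
Proof.
rewrite /bdist /Wn -sum1_card big_mkcond /= big_mkord.
apply: eq_bigr => i _; rewrite inE.
have -> : (bread b x i != bread b y i) = win n b (fo x y) i.
  rewrite /win -[has _ _]negbK; congr (~~ _).
  apply/eqP/hasPn => [H j|H].
  - rewrite mem_iota add0n => /andP[_ Hj].
    have := congr1 (fun f : {ffun 'I_b -> F} => f (Ordinal Hj)) H; rewrite /bread !ffunE.
    have -> : (i + j) %% n = cyc_idx i (Ordinal Hj) by [].
    by rewrite fo_val => ->; rewrite eqxx.
  - apply/ffunP => j; rewrite !ffunE.
    have := H j; rewrite mem_iota add0n leq0n ltn_ord => /(_ isT).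
    have -> : (i + j) %% n = cyc_idx i j by [].
    by rewrite fo_val negbK => /eqP.
by case: (win _ _ _ _).
Qed.

Theorem lemma3p1 (F : finFieldType) (b k r : nat)
  (hb : 0 < b) (hk : 0 < k) (hr : 0 < r)
  (x1 y1 : 'rV[F]_k) (x2 y2 : 'rV[F]_r) :
  (bdist b x1 y1 + bdist b x2 y2 <= bdist b (row_mx x1 x2) (row_mx y1 y2) + (b - 1))%N /\
  (bdist b (row_mx x1 x2) (row_mx y1 y2) <= bdist b x1 y1 + bdist b x2 y2 + (b - 1))%N.
Proof.
rewrite !bdist_W; apply: main_nat => // p hp.
- have -> : p = val (lshift r (Ordinal hp)) by [].
  by rewrite !fo_val !row_mxEl.
- have -> : k + p = val (rshift k (Ordinal hp)) by [].
  rewrite !fo_val !row_mxEr.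
  by rewrite -(fo_val x2 y2 (Ordinal hp)).
Qed.
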